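(* Consider the following TOPSIS procedure. Given $n$ alternatives $A_1,\dots,A_n$, $m$ attributes $\mathscr{O}_1,\dots,\mathscr{O}_m$ each classified as benefit or cost, an intuitionistic fuzzy decision matrix $R=(r_{ij})_{n\times m}$ with $r_{ij}=\langle\mu_{ij},\nu_{ij}\rangle\in\tilde{\mathbb{I}}$, real weights $\omega_1,\dots,\omega_m$ with $\omega_j\in(0,1]$ and $\sum_j\omega_j=1$, and a parameter $\lambda\ge1$: (i) normalize: $\bar r_{ij}=\langle\bar\mu_{ij},\bar\nu_{ij}\rangle=r_{ij}$ if $\mathscr{O}_j$ is a benefit attribute and $\bar r_{ij}=\langle\nu_{ij},\mu_{ij}\rangle$ if $\mathscr{O}_j$ is a cost attribute; (ii) ideal points: $\langle\mu_j^+,\nu_j^+\rangle=\langle\max_i\bar\mu_{ij},\min_i\bar\nu_{ij}\rangle$ and $\langle\mu_j^-,\nu_j^-\rangle=\langle\min_i\bar\mu_{ij},\max_i\bar\nu_{ij}\rangle$; (iii) $\mathbf{S}(A_i,\mathbf{A}^+)=1-\sum_{j=1}^m\omega_j\,\varrho^{(\lambda)}(\bar r_{ij},\langle\mu_j^+,\nu_j^+\rangle)$ and $\mathbf{S}(A_i,\mathbf{A}^-)=1-\sum_{j=1}^m\omega_j\,\varrho^{(\lambda)}(\bar r_{ij},\langle\mu_j^-,\nu_j^-\rangle)$; (iv) $\mathscr{C}_i=\frac{\mathbf{S}(A_i,\mathbf{A}^+)}{\mathbf{S}(A_i,\mathbf{A}^+)+\mathbf{S}(A_i,\mathbf{A}^-)}$.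 Then this procedure is increasing with the linear order $\le_{XY}$: if $1\le i_1,i_2\le n$ are such that $\bar r_{i_1j}\le_{XY}\bar r_{i_2j}$ for all $1\le j\le m$, then $\mathscr{C}_{i_1}\le\mathscr{C}_{i_2}$. In particular, it is increasing with Atanassov's order: if $\bar r_{i_1j}\subset\bar r_{i_2j}$ for all $j$, then $\mathscr{C}_{i_1}\le\mathscr{C}_{i_2}$.
   Context: $\tilde{\mathbb{I}}=\{\langle\mu,\nu\rangle\in[0,1]^2\mid\mu+\nu\le1\}$ (intuitionistic fuzzy values). For $\alpha=\langle\mu_\alpha,\nu_\alpha\rangle$: $s(\alpha)=\mu_\alpha-\nu_\alpha$, $h(\alpha)=\mu_\alpha+\nu_\alpha$. Order $\le_{XY}$: $\alpha<_{XY}\beta$ if $s(\alpha)<s(\beta)$, or $s(\alpha)=s(\beta)$ and $h(\alpha)<h(\beta)$; $\alpha\le_{XY}\beta$ means $\alpha<_{XY}\beta$ or $\alpha=\beta$. Atanassov's order: $\langle\mu_1,\nu_1\rangle\subset\langle\mu_2,\nu_2\rangle$ iff $\mu_1\le\mu_2$ and $\nu_1\ge\nu_2$. For $\lambda\ge1$, $\varrho^{(\lambda)}(\alpha,\beta)=\frac{1}{1+2\lambda}(1+\lambda|s(\alpha)-s(\beta)|)$ if $s(\alpha)\ne s(\beta)$ and $\varrho^{(\lambda)}(\alpha,\beta)=\frac{1}{1+2\lambda}|h(\alpha)-h(\beta)|$ if $s(\alpha)=s(\beta)$. *)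

(* Defs.v *)
From HB Require Import structures.
From mathcomp Require Import all_boot all_order all_algebra.
Set Implicit Arguments. Unset Strict Implicit. Unset Printing Implicit Defensive.
Import Order.TTheory GRing.Theory Num.Theory.
Local Open Scope ring_scope.

Section IFV.
Variable R : realFieldType.

(* an intuitionistic fuzzy value <mu, nu> is a pair (mu, nu) *)
Definition IFV := (R * R)%type.

Definition is_IFV (a : IFV) : Prop :=
  0 <= a.1 <= 1 /\ 0 <= a.2 <= 1 /\ a.1 + a.2 <= 1.

Definition score (a : IFV) : R := a.1 - a.2.
Definition accuracy (a : IFV) : R := a.1 + a.2.

Definition lt_XY (a b : IFV) : Prop :=
  score a < score b \/ (score a = score b /\ accuracy a < accuracy b).
Definition le_XY (a b : IFV) : Prop := lt_XY a b \/ a = b.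

Definition atanassov_le (a b : IFV) : Prop := a.1 <= b.1 /\ a.2 >= b.2.

Definition rho (lam : R) (a b : IFV) : R :=
  if score a != score b
  then (1 + 2 * lam)^-1 * (1 + lam * `|score a - score b|)
  else (1 + 2 * lam)^-1 * `|accuracy a - accuracy b|.

Section Topsis.
Variables (n m : nat) (benefit : 'I_m -> bool) (r : 'I_n -> 'I_m -> IFV)
  (w : 'I_m -> R) (lam : R).

Definition rbar (i : 'I_n) (j : 'I_m) : IFV :=
  if benefit j then r i j else ((r i j).2, (r i j).1).

(* (ii) ideal points; the neutral elements 0 (for max) and 1 (for min)
   do not affect the value since all entries lie in [0,1] and n >= 1. *)
Definition pos_ideal (j : 'I_m) : IFV :=
  (\big[Num.max/0]_(i < n) (rbar i j).1, \big[Num.min/1]_(i < n) (rbar i j).2).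
Definition neg_ideal (j : 'I_m) : IFV :=
  (\big[Num.min/1]_(i < n) (rbar i j).1, \big[Num.max/0]_(i < n) (rbar i j).2).

Definition S_pos (i : 'I_n) : R :=
  1 - \sum_(j < m) w j * rho lam (rbar i j) (pos_ideal j).
Definition S_neg (i : 'I_n) : R :=
  1 - \sum_(j < m) w j * rho lam (rbar i j) (neg_ideal j).

Definition closeness (i : 'I_n) : R := S_pos i / (S_pos i + S_neg i).
End Topsis.
End IFV.

(* Main.v *)
Require Import Defs.
From HB Require Import structures.
From mathcomp Require Import all_boot all_order all_algebra.
From mathcomp Require Import lra.
Import Order.TTheory GRing.Theory Num.Theory.
Set Implicit Arguments. Unset Strict Implicit.
Local Open Scope ring_scope.

Section Aux.
Variable R : realFieldType.

Lemma atan_eq (b c : IFV R) : atanassov_le b c -> score b = score c -> b = c.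
Proof.
case: b c => [b1 b2] [c1 c2]; rewrite /atanassov_le /score /= => -[h1 h2] hs.
have e1 : b1 = c1 by lra.
have e2 : b2 = c2 by lra.
by rewrite e1 e2.
Qed.

Lemma atan_score (b c : IFV R) : atanassov_le b c -> score b <= score c.
Proof. case: b c => [b1 b2] [c1 c2]; rewrite /atanassov_le /score /= => -[h1 h2]; lra. Qed.

Lemma atan_XY (b c : IFV R) : atanassov_le b c -> le_XY b c.
Proof.
move=> h; have := atan_score h; rewrite le_eqVlt => /orP[/eqP e|lt].
  by right; apply: atan_eq.
by left; left.
Qed.

Lemma XY_score (a b : IFV R) : le_XY a b -> score a <= score b.
Proof. by case=> [[h|[-> _]]|->] //; apply: ltW. Qed.

Lemma rho_ge0 lam (a b : IFV R) : 1 <= lam -> 0 <= rho lam a b.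
Proof.
move=> hl; rewrite /rho; have hp : 0 <= (1 + 2 * lam)^-1 by rewrite invr_ge0; lra.
case: ifP => _; apply: mulr_ge0 => //.
have := normr_ge0 (score a - score b); nra.
Qed.

Lemma rho_pos lam (a b c : IFV R) : 1 <= lam -> le_XY a b ->
  atanassov_le b c -> atanassov_le a c -> rho lam b c <= rho lam a c.
Proof.
move=> hl hab hbc hac.
have hp : 0 < (1 + 2 * lam)^-1 by rewrite invr_gt0; lra.
have sab := XY_score hab; have sbc := atan_score hbc.
case: (eqVneq (score b) (score c)) => e.
  rewrite (atan_eq hbc e) /rho eqxx /= subrr normr0 mulr0; exact: rho_ge0.
have lt : score b < score c by rewrite lt_neqAle e.
have nac : score a != score c by apply/eqP => h; move: lt; rewrite -h; lra.
rewrite /rho e nac /=; rewrite ler_pM2l //.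
rewrite !ler0_norm; [|lra|lra]. rewrite lerD2l ler_pM2l; lra.
Qed.

Lemma rho_neg lam (a b c : IFV R) : 1 <= lam -> le_XY a b ->
  atanassov_le c a -> atanassov_le c b -> rho lam a c <= rho lam b c.
Proof.
move=> hl hab hca hcb.
have hp : 0 < (1 + 2 * lam)^-1 by rewrite invr_gt0; lra.
have sab := XY_score hab; have sca := atan_score hca.
case: (eqVneq (score c) (score a)) => e.
  rewrite -(atan_eq hca e) /rho eqxx /= subrr normr0 mulr0; exact: rho_ge0.
have lt : score c < score a by rewrite lt_neqAle e.
have nbc : score b != score c by apply/eqP => h; move: lt; rewrite -h; lra.
have nac : score a != score c by rewrite eq_sym.
rewrite /rho nbc nac /=; rewrite ler_pM2l //.
rewrite !ger0_norm; [|lra|lra]. rewrite lerD2l ler_pM2l; lra.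
Qed.

Definition unit01 (a : IFV R) := 0 <= a.1 <= 1 /\ 0 <= a.2 <= 1.

Lemma rho_le1 lam (a b : IFV R) : 1 <= lam -> unit01 a -> unit01 b -> rho lam a b <= 1.
Proof.
case: a b => [a1 a2] [b1 b2] hl; rewrite /unit01 /= => -[/andP[? ?] /andP[? ?]] [/andP[? ?] /andP[? ?]].
have hp : 0 < 1 + 2 * lam by lra.
rewrite /rho /score /accuracy /=; case: ifP => _;
  rewrite mulrC ler_pdivrMr // mul1r.
  have : `|a1 - a2 - (b1 - b2)| <= 2.
    rewrite ler_norml; apply/andP. split; lra.
  nra.
have : `|a1 + a2 - (b1 + b2)| <= 2.
  by rewrite ler_norml; apply/andP; split; lra.
lra.
Qed.

Lemma frac_mono (a b c d : R) : 0 <= a -> 0 <= b -> 0 <= d -> a <= c -> d <= b ->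
  a / (a + b) <= c / (c + d).
Proof.
move=> ha hb hd hac hdb.
case: (eqVneq a 0) => [->|a0].
  rewrite mul0r; apply: divr_ge0; lra.
have apos : 0 < a by rewrite lt_neqAle eq_sym a0.
have h1 : 0 < a + b by lra.
have h2 : 0 < c + d by lra.
rewrite ler_pdivrMr // mulrAC ler_pdivlMr //.
nra.
Qed.

End Aux.

Theorem theorem6 (R : realFieldType) (n m : nat) (benefit : 'I_m -> bool)
  (r : 'I_n -> 'I_m -> IFV R) (w : 'I_m -> R) (lam : R)
  (hr : forall i j, is_IFV (r i j))
  (hw : forall j, 0 < w j <= 1)
  (hwsum : \sum_(j < m) w j = 1)
  (hlam : 1 <= lam)
  (i1 i2 : 'I_n) :
  ((forall j, le_XY (rbar benefit r i1 j) (rbar benefit r i2 j)) ->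
     closeness benefit r w lam i1 <= closeness benefit r w lam i2) /\
  ((forall j, atanassov_le (rbar benefit r i1 j) (rbar benefit r i2 j)) ->
     closeness benefit r w lam i1 <= closeness benefit r w lam i2).
Proof.
set rb := rbar benefit r.
have rb01 : forall i j, unit01 (rb i j).
  move=> i j; rewrite /rb /rbar; have [h1 [h2 _]] := hr i j.
  by case: (benefit j); split.
have pos01 : forall j, unit01 (pos_ideal benefit r j).
  move=> j; rewrite /pos_ideal /=; split.
    apply: (big_ind (fun x => 0 <= x <= 1)); first by rewrite lexx ler01.
      move=> x y /andP[? ?] /andP[? ?]; rewrite /Num.max; case: ifP => _; apply/andP; split => //.
    by move=> i _; have [] := rb01 i j.
  apply: (big_ind (fun x => 0 <= x <= 1)); first by rewrite lexx ler01.
    move=> x y /andP[? ?] /andP[? ?]; rewrite /Num.min; case: ifP => _; apply/andP; split => //.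
  by move=> i _; have [] := rb01 i j.
have neg01 : forall j, unit01 (neg_ideal benefit r j).
  move=> j; rewrite /neg_ideal /=; split.
    apply: (big_ind (fun x => 0 <= x <= 1)); first by rewrite lexx ler01.
      move=> x y /andP[? ?] /andP[? ?]; rewrite /Num.min; case: ifP => _; apply/andP; split => //.
    by move=> i _; have [] := rb01 i j.
  apply: (big_ind (fun x => 0 <= x <= 1)); first by rewrite lexx ler01.
    move=> x y /andP[? ?] /andP[? ?]; rewrite /Num.max; case: ifP => _; apply/andP; split => //.
  by move=> i _; have [] := rb01 i j.
have posA : forall i j, atanassov_le (rb i j) (pos_ideal benefit r j).
  move=> i j; rewrite /pos_ideal; split => /=.
    exact: (le_bigmax 0 (fun i => (rb i j).1) i).
  exact: (bigmin_le 1 i (fun i => (rb i j).2)).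
have negA : forall i j, atanassov_le (neg_ideal benefit r j) (rb i j).
  move=> i j; rewrite /neg_ideal; split => /=.
    exact: (bigmin_le 1 i (fun i => (rb i j).1)).
  exact: (le_bigmax 0 (fun i => (rb i j).2) i).
have Sge0 : forall (c : 'I_m -> IFV R), (forall j, unit01 (c j)) -> forall i,
    0 <= 1 - \sum_(j < m) w j * rho lam (rb i j) (c j).
  move=> c hc i; rewrite subr_ge0 -hwsum; apply: ler_sum => j _.
  have /andP[w0 _] := hw j.
  by rewrite -{2}(mulr1 (w j)) ler_pM2l // rho_le1.
have main : (forall j, le_XY (rb i1 j) (rb i2 j)) ->
     closeness benefit r w lam i1 <= closeness benefit r w lam i2.
  move=> hle; rewrite /closeness; apply: frac_mono.
  - exact: Sge0.
  - exact: Sge0.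
  - exact: Sge0.
  - rewrite /S_pos lerD2l lerN2; apply: ler_sum => j _.
    have /andP[w0 _] := hw j.
    by rewrite ler_pM2l //; apply: rho_pos.
  - rewrite /S_neg lerD2l lerN2; apply: ler_sum => j _.
    have /andP[w0 _] := hw j.
    by rewrite ler_pM2l //; apply: rho_neg.
split => // h; apply: main => j; exact: atan_XY.
Qed.
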